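(* There exists an infinite strictly increasing sequence $\langle e_n : n\in\omega\rangle$ of natural numbers such that $W_{e_n}=\{e_m : m>n\}$ for every $n\in\omega$, and such that the sequence $\langle e_n:n\in\omega\rangle$ is not computable.
   Context: $\omega$ denotes the set of natural numbers $\{0,1,2,\dots\}$. $\langle \psi_e : e\in\omega\rangle$ is a standard (acceptable, in the sense of Rogers) computable numbering of all partial computable functions from $\omega$ to $\omega$, and $W_e$ denotes the domain of $\psi_e$, so $\langle W_e:e\in\omega\rangle$ is a uniform listing of all computably enumerable subsets of $\omega$. *)

(* Defs.v *)
(* A concrete acceptable Goedel numbering of the unary partial
   recursive functions, built from a mu-recursive basis over Cantor pairing. *)
From Stdlib Require Import Arith PeanoNat.

Definition cpair (a b : nat) : nat := (a + b) * (a + b + 1) / 2 + b.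

(** Codes of unary partial recursive functions (arguments of several
    variables are passed as Cantor pairs). *)
Inductive code : Type :=
| cZero
| cSucc
| cFst
| cSnd
| cId
| cComp (f g : code)
| cPair (f g : code)
| cRec  (f g : code)         (* h<x,0> = f x ; h<x,n+1> = g <x,<n,h<x,n>>> *)
| cMu   (f : code).          (* x |-> least n with f<n,x> = 0 (all earlier defined, nonzero) *)

Inductive eval : code -> nat -> nat -> Prop :=
| ev_zero x : eval cZero x 0
| ev_succ x : eval cSucc x (S x)
| ev_fst a b : eval cFst (cpair a b) a
| ev_snd a b : eval cSnd (cpair a b) b
| ev_id x : eval cId x x
| ev_comp f g x y z : eval g x y -> eval f y z -> eval (cComp f g) x z
| ev_pair f g x a b : eval f x a -> eval g x b -> eval (cPair f g) x (cpair a b)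
| ev_rec0 f g x y : eval f x y -> eval (cRec f g) (cpair x 0) y
| ev_recS f g x n y z :
    eval (cRec f g) (cpair x n) y ->
    eval g (cpair x (cpair n y)) z ->
    eval (cRec f g) (cpair x (S n)) z
| ev_mu f x n :
    eval f (cpair n x) 0 ->
    (forall m, m < n -> exists k, eval f (cpair m x) (S k)) ->
    eval (cMu f) x n.

(** Goedel numbering of codes; this is a bijection code -> nat. *)
Fixpoint encode (c : code) : nat :=
  match c with
  | cZero => 0
  | cSucc => 1
  | cFst => 2
  | cSnd => 3
  | cId => 4
  | cComp f g => 5 + 4 * cpair (encode f) (encode g)
  | cPair f g => 6 + 4 * cpair (encode f) (encode g)
  | cRec f g => 7 + 4 * cpair (encode f) (encode g)
  | cMu f => 8 + 4 * encode f
  end.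

Definition psi (e x y : nat) : Prop :=
  exists c : code, encode c = e /\ eval c x y.

Definition W (e x : nat) : Prop := exists y, psi e x y.

Definition computable (f : nat -> nat) : Prop :=
  exists c : nat, forall n, psi c n (f n).

(* Main.v *)
Require Import Defs.
From Stdlib Require Import Arith PeanoNat Lia List Classical ClassicalEpsilon.
Import ListNotations.

Lemma tri_S s : S s * (S s + 1) / 2 = s * (s + 1) / 2 + S s.
Proof.
  replace (S s * (S s + 1)) with (s * (s+1) + S s * 2) by nia.
  rewrite Nat.div_add; lia.
Qed.

Lemma cpair_Sb a b : cpair a (S b) = S (cpair (S a) b).
Proof. unfold cpair. replace (a + S b) with (S a + b) by lia. lia. Qed.

Lemma cpair_Sa0 a : cpair (S a) 0 = S (cpair 0 a).
Proof. unfold cpair. rewrite !Nat.add_0_r. simpl (0 + a). rewrite tri_S. lia. Qed.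

Lemma cpair_00 : cpair 0 0 = 0.
Proof. reflexivity. Qed.

Fixpoint unpair (n : nat) : nat * nat :=
  match n with
  | 0 => (0, 0)
  | S m => let (a, b) := unpair m in
           match a with 0 => (S b, 0) | S a' => (a', S b) end
  end.

Definition pfst n := fst (unpair n).
Definition psnd n := snd (unpair n).

Lemma cpair_unpair n : cpair (pfst n) (psnd n) = n.
Proof.
  unfold pfst, psnd. induction n as [|n IH]; [reflexivity|].
  simpl. destruct (unpair n) as [a b]. simpl in *.
  destruct a as [|a].
  - simpl. rewrite cpair_Sa0. congruence.
  - simpl. rewrite cpair_Sb. congruence.
Qed.

Lemma cpair_ge_b a b : b <= cpair a b.
Proof. unfold cpair. lia. Qed.

Lemma cpair_ge_a a b : a <= cpair a b.
Proof. unfold cpair.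
  assert (a + b <= (a+b)*(a+b+1)/2).
  { apply Nat.div_le_lower_bound; [lia|]. nia. } lia. Qed.

Lemma unpair_cpair a b : unpair (cpair a b) = (a, b).
Proof.
  remember (cpair a b) as n eqn:Hn. revert a b Hn.
  induction n as [|n IH]; intros a b Hn.
  - assert (b = 0) by (pose proof (cpair_ge_b a b); lia).
    assert (a = 0) by (pose proof (cpair_ge_a a b); lia). subst; reflexivity.
  - destruct b as [|b].
    + destruct a as [|a]. { rewrite cpair_00 in Hn. discriminate. }
      rewrite cpair_Sa0 in Hn. injection Hn as Hn. simpl. rewrite (IH 0 a Hn). reflexivity.
    + rewrite cpair_Sb in Hn. injection Hn as Hn. simpl. rewrite (IH (S a) b Hn). reflexivity.
Qed.

Lemma pfst_cpair a b : pfst (cpair a b) = a.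
Proof. unfold pfst. rewrite unpair_cpair. reflexivity. Qed.
Lemma psnd_cpair a b : psnd (cpair a b) = b.
Proof. unfold psnd. rewrite unpair_cpair. reflexivity. Qed.

Lemma cpair_inj a b a' b' : cpair a b = cpair a' b' -> a = a' /\ b = b'.
Proof. intro H. pose proof (pfst_cpair a b). pose proof (psnd_cpair a b).
  rewrite H, pfst_cpair, psnd_cpair in *. split; congruence. Qed.

Lemma cpair_lt_b a b : cpair a b < cpair a (S b).
Proof. rewrite cpair_Sb. unfold cpair.
  assert ((a+b)*(a+b+1)/2 <= (S a+b)*(S a+b+1)/2).
  { apply Nat.Div0.div_le_mono. nia. } lia. Qed.

Lemma cpair_lt_a a b : cpair a b < cpair (S a) b.
Proof. unfold cpair. replace (S a + b) with (S (a+b)) by lia. rewrite tri_S. lia. Qed.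

Lemma cpair_mono_a a a' b : a < a' -> cpair a b < cpair a' b.
Proof. induction 1. apply cpair_lt_a. pose proof (cpair_lt_a m b). lia. Qed.

Lemma encode_inj c1 c2 : encode c1 = encode c2 -> c1 = c2.
Proof.
  revert c2; induction c1; destruct c2; simpl; intro H; try lia;
  try (apply cpair_inj in H || (assert (H' : cpair (encode c1_1) (encode c1_2) = cpair (encode c2_1) (encode c2_2)) by lia; apply cpair_inj in H'));
  try reflexivity.
  all: try (destruct H' as [H1 H2]; f_equal; auto).
  f_equal. apply IHc1. lia.
Qed.

Lemma eval_ind2 (P : code -> nat -> nat -> Prop)
  (H0 : forall x, P cZero x 0)
  (H1 : forall x, P cSucc x (S x))
  (H2 : forall a b, P cFst (cpair a b) a)
  (H3 : forall a b, P cSnd (cpair a b) b)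
  (H4 : forall x, P cId x x)
  (H5 : forall f g x y z, eval g x y -> P g x y -> eval f y z -> P f y z -> P (cComp f g) x z)
  (H6 : forall f g x a b, eval f x a -> P f x a -> eval g x b -> P g x b -> P (cPair f g) x (cpair a b))
  (H7 : forall f g x y, eval f x y -> P f x y -> P (cRec f g) (cpair x 0) y)
  (H8 : forall f g x n y z, eval (cRec f g) (cpair x n) y -> P (cRec f g) (cpair x n) y ->
        eval g (cpair x (cpair n y)) z -> P g (cpair x (cpair n y)) z -> P (cRec f g) (cpair x (S n)) z)
  (H9 : forall f x n, eval f (cpair n x) 0 -> P f (cpair n x) 0 ->
        (forall m, m < n -> exists k, eval f (cpair m x) (S k) /\ P f (cpair m x) (S k)) ->
        P (cMu f) x n) :
  forall c x y, eval c x y -> P c x y.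
Proof.
  fix IH 4. intros c x y H. destruct H as [| | | | | | | | |f x n Hf Hall].
  - apply H0.
  - apply H1.
  - apply H2.
  - apply H3.
  - apply H4.
  - eapply H5; eauto.
  - eapply H6; eauto.
  - eapply H7; eauto.
  - eapply H8; eauto.
  - apply H9; auto. intros m Hm. destruct (Hall m Hm) as [k Hk]. exists k. split; [exact Hk| exact (IH _ _ _ Hk)].
Qed.

Ltac cpinj := repeat match goal with
  | H : cpair _ _ = cpair _ _ |- _ => apply cpair_inj in H; destruct H as [? ?]; subst
  end.

Lemma eval_det c x y : eval c x y -> forall y', eval c x y' -> y = y'.
Proof.
  revert c x y. apply (eval_ind2 (fun c x y => forall y', eval c x y' -> y = y')).
  - intros x y' H; inversion H; auto.
  - intros x y' H; inversion H; auto.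
  - intros a b y' H; inversion H; cpinj; auto.
  - intros a b y' H; inversion H; cpinj; auto.
  - intros x y' H; inversion H; auto.
  - intros f g x y z _ IHg _ IHf y' H; inversion H; subst.
    match goal with H1 : eval g x ?w |- _ => apply IHg in H1; subst end. apply IHf; auto.
  - intros f g x a b _ IHf _ IHg y' H; inversion H; subst.
    f_equal; auto.
  - intros f g x y _ IHf y' H; inversion H; cpinj; auto. discriminate.
  - intros f g x n y z _ IHr _ IHg y' H; inversion H; cpinj; try discriminate.
    match goal with H : S _ = S _ |- _ => injection H as H; subst end.
    match goal with H1 : eval (cRec f g) _ ?w |- _ => apply IHr in H1; subst end. apply IHg; auto.
  - intros f x n _ IHf Hall y' H; inversion H; subst.
    destruct (Nat.lt_trichotomy n y') as [Hl|[Hl|Hl]]; auto.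
    + match goal with H1 : forall m, m < y' -> _ |- _ => destruct (H1 n Hl) as [k Hk] end. apply IHf in Hk. discriminate.
    + destruct (Hall y' Hl) as [k [Hk IHk]].
      match goal with H1 : eval f (cpair y' x) 0 |- _ => apply IHk in H1 end. discriminate.
Qed.

Definition Comp c (F : nat -> nat) := forall x, eval c x (F x).
Definition Comp2 c (F : nat -> nat -> nat) := forall a b, eval c (cpair a b) (F a b).

Lemma fst_ok : Comp cFst pfst.
Proof. intro x. rewrite <- (cpair_unpair x) at 1. apply ev_fst. Qed.
Lemma snd_ok : Comp cSnd psnd.
Proof. intro x. rewrite <- (cpair_unpair x) at 1. apply ev_snd. Qed.

Fixpoint cconst n := match n with 0 => cZero | S n => cComp cSucc (cconst n) end.
Lemma const_ok n x : eval (cconst n) x n.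
Proof. induction n; simpl. constructor. econstructor; eauto. constructor. Qed.

Lemma comp_ok f g F G : Comp f F -> Comp g G -> Comp (cComp f g) (fun x => F (G x)).
Proof. intros Hf Hg x. econstructor; eauto. Qed.

Lemma pair_ok f g F G x : eval f x F -> eval g x G -> eval (cPair f g) x (cpair F G).
Proof. intros; constructor; auto. Qed.

Lemma snd2 x n z : eval (cComp cSnd cSnd) (cpair x (cpair n z)) z.
Proof. econstructor; constructor. Qed.
Lemma fst2 x n z : eval (cComp cFst cSnd) (cpair x (cpair n z)) n.
Proof. econstructor; constructor. Qed.

Definition cAdd := cRec cId (cComp cSucc (cComp cSnd cSnd)).
Lemma add_ok : Comp2 cAdd Nat.add.
Proof. intros a n. induction n.
  - rewrite Nat.add_0_r. constructor. constructor.
  - rewrite Nat.add_succ_r. econstructor. eauto. econstructor. apply snd2. constructor.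
Qed.

Definition cPred := cComp (cRec cZero (cComp cFst cSnd)) (cPair cZero cId).
Lemma pred_ok : Comp cPred Nat.pred.
Proof. intro x. econstructor. constructor; constructor.
  induction x. constructor; constructor. econstructor. eauto. apply fst2.
Qed.

Definition cSub := cRec cId (cComp cPred (cComp cSnd cSnd)).
Lemma sub_ok : Comp2 cSub Nat.sub.
Proof. intros a n. induction n.
  - rewrite Nat.sub_0_r. constructor. constructor.
  - replace (a - S n) with (Nat.pred (a - n)) by lia. econstructor. eauto. econstructor. apply snd2. apply pred_ok.
Qed.

Definition cMul := cRec cZero (cComp cAdd (cPair (cComp cSnd cSnd) cFst)).
Lemma mul_ok : Comp2 cMul Nat.mul.
Proof. intros a n. induction n.
  - rewrite Nat.mul_0_r. constructor. constructor.
  - replace (a * S n) with (a * n + a) by lia. econstructor. eauto. econstructor.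
    constructor. apply snd2. constructor. apply add_ok.
Qed.

Fixpoint Tf s := match s with 0 => 0 | S n => S (Tf n + n) end.
Lemma Tf_eq s : Tf s = s * (s+1) / 2.
Proof. induction s. reflexivity. rewrite tri_S. simpl Tf. rewrite IHs. lia. Qed.

Definition cTri := cComp (cRec cZero (cComp cSucc (cComp cAdd (cPair (cComp cSnd cSnd) (cComp cFst cSnd))))) (cPair cZero cId).
Lemma tri_ok : Comp cTri Tf.
Proof. intro s. econstructor. constructor; constructor.
  induction s. constructor; constructor.
  econstructor. eauto. econstructor. econstructor. constructor. apply snd2. apply fst2. apply add_ok. constructor.
Qed.

Definition cCpair := cComp cAdd (cPair (cComp cTri cAdd) cSnd).
Lemma cpair_ok : Comp2 cCpair cpair.
Proof. intros a b. apply (ev_comp _ _ _ (cpair (Tf (a+b)) b)).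
  - constructor. econstructor. apply add_ok. apply tri_ok. constructor.
  - assert (E: cpair a b = Tf (a+b) + b) by (unfold cpair; rewrite Tf_eq; reflexivity).
    rewrite E. apply add_ok. Qed.

Definition dropF s j := Nat.iter j psnd s.
Definition cDrop := cRec cId (cComp cSnd (cComp cSnd cSnd)).
Lemma drop_ok : Comp2 cDrop dropF.
Proof. intros s n. induction n.
  - constructor; constructor.
  - econstructor. eauto. econstructor. apply snd2. apply snd_ok.
Qed.

Inductive tm : Type :=
| Var (k : nat)
| Cst (n : nat)
| App1 (c : code) (F : nat -> nat) (t : tm)
| App2 (c : code) (F : nat -> nat -> nat) (t1 t2 : tm).

Inductive fm : Type :=
| Eq (t1 t2 : tm)
| And (a b : fm)
| Or (a b : fm)
| Not (a : fm)
| Ball (t : tm) (a : fm)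
| Bex (t : tm) (a : fm).

Fixpoint tev (t : tm) (l : list nat) : nat :=
  match t with
  | Var k => nth k l 0
  | Cst n => n
  | App1 _ F t => F (tev t l)
  | App2 _ F t1 t2 => F (tev t1 l) (tev t2 l)
  end.

Fixpoint wft (t : tm) : Prop :=
  match t with
  | Var _ => True
  | Cst _ => True
  | App1 c F t => Comp c F /\ wft t
  | App2 c F t1 t2 => Comp2 c F /\ wft t1 /\ wft t2
  end.

Fixpoint holds (a : fm) (l : list nat) : Prop :=
  match a with
  | Eq t1 t2 => tev t1 l = tev t2 l
  | And a b => holds a l /\ holds b l
  | Or a b => holds a l \/ holds b l
  | Not a => ~ holds a l
  | Ball t a => forall j, j < tev t l -> holds a (j :: l)
  | Bex t a => exists j, j < tev t l /\ holds a (j :: l)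
  end.

Fixpoint wff (a : fm) : Prop :=
  match a with
  | Eq t1 t2 => wft t1 /\ wft t2
  | And a b | Or a b => wff a /\ wff b
  | Not a => wff a
  | Ball t a | Bex t a => wft t /\ wff a
  end.

Fixpoint bsum (f : nat -> nat) n := match n with 0 => 0 | S n => bsum f n + f n end.
Fixpoint bprod (f : nat -> nat) n := match n with 0 => 1 | S n => bprod f n * f n end.

Lemma bsum_0 f n : bsum f n = 0 <-> forall j, j < n -> f j = 0.
Proof. induction n; simpl. split; intros; auto; lia.
  split. intros H j Hj. assert (bsum f n = 0 /\ f n = 0) as [H1 H2] by lia.
  destruct (Nat.eq_dec j n). subst; auto. apply IHn; auto; lia.
  intros H. rewrite (proj2 IHn). rewrite H; auto. intros; apply H; lia. Qed.

Lemma bprod_0 f n : bprod f n = 0 <-> exists j, j < n /\ f j = 0.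
Proof. induction n; simpl. split. lia. intros [j [Hj _]]; lia.
  rewrite Nat.mul_eq_0, IHn. split.
  intros [[j [Hj H]]|H]; exists j || exists n; split; auto; lia.
  intros [j [Hj H]]. destruct (Nat.eq_dec j n). subst; auto. left; exists j; split; auto; lia. Qed.

Fixpoint fval (a : fm) (l : list nat) : nat :=
  match a with
  | Eq t1 t2 => (tev t1 l - tev t2 l) + (tev t2 l - tev t1 l)
  | And a b => fval a l + fval b l
  | Or a b => fval a l * fval b l
  | Not a => 1 - fval a l
  | Ball t a => bsum (fun j => fval a (j :: l)) (tev t l)
  | Bex t a => bprod (fun j => fval a (j :: l)) (tev t l)
  end.

Lemma fval_holds a : forall l, fval a l = 0 <-> holds a l.
Proof. induction a; intro l; simpl.
  - lia.
  - rewrite <- IHa1, <- IHa2. lia.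
  - rewrite <- IHa1, <- IHa2. lia.
  - rewrite <- IHa. destruct (fval a l); simpl; split; intro H; try lia; exfalso; apply H; auto.
  - rewrite bsum_0. split; intros H j Hj; apply IHa; auto.
  - rewrite bprod_0. split; intros [j [Hj H]]; exists j; split; auto; apply IHa; auto.
Qed.

Fixpoint enc (l : list nat) : nat := match l with [] => 0 | v :: r => cpair v (enc r) end.

Fixpoint vcode k := match k with 0 => cFst | S k => cComp (vcode k) cSnd end.

Lemma snd_enc l : eval cSnd (enc l) (enc (tl l)).
Proof. destruct l; simpl. rewrite <- cpair_00 at 1. constructor. constructor. Qed.

Lemma vcode_ok k : forall l, eval (vcode k) (enc l) (nth k l 0).
Proof. induction k; intro l.
  - destruct l; simpl. rewrite <- cpair_00 at 1. constructor. constructor.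
  - simpl. econstructor. apply snd_enc. replace (nth (S k) l 0) with (nth k (tl l) 0). apply IHk.
    destruct l; simpl; auto. destruct k; auto.
Qed.

Fixpoint tc (t : tm) : code :=
  match t with
  | Var k => vcode k
  | Cst n => cconst n
  | App1 c _ t => cComp c (tc t)
  | App2 c _ t1 t2 => cComp c (cPair (tc t1) (tc t2))
  end.

Lemma tc_ok t : wft t -> forall l, eval (tc t) (enc l) (tev t l).
Proof. induction t; simpl; intros H l.
  - apply vcode_ok.
  - apply const_ok.
  - destruct H. econstructor. apply IHt; auto. apply H.
  - destruct H as [H [H1 H2]]. econstructor. constructor; [apply IHt1|apply IHt2]; auto. apply H.
Qed.

Definition cDist := cComp cAdd (cPair cSub (cComp cSub (cPair cSnd cFst))).

Definition cBig (z : nat) (op : code) (a : code) (t : code) :=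
  cComp (cRec (cconst z) (cComp op (cPair (cComp cSnd cSnd) (cComp a (cPair (cComp cFst cSnd) cFst)))))
        (cPair cId t).

Fixpoint cf (a : fm) : code :=
  match a with
  | Eq t1 t2 => cComp cDist (cPair (tc t1) (tc t2))
  | And a b => cComp cAdd (cPair (cf a) (cf b))
  | Or a b => cComp cMul (cPair (cf a) (cf b))
  | Not a => cComp cSub (cPair (cconst 1) (cf a))
  | Ball t a => cBig 0 cAdd (cf a) (tc t)
  | Bex t a => cBig 1 cMul (cf a) (tc t)
  end.

Lemma dist_ok a b : eval cDist (cpair a b) ((a - b) + (b - a)).
Proof. econstructor. constructor. apply sub_ok. econstructor. constructor; constructor. apply sub_ok.
  apply add_ok. Qed.

Lemma big_ok z op ca F F' (Hop : Comp2 op F) l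
  (Ha : forall j, eval ca (enc (j :: l)) (F' j)) n :
  forall (G : nat -> nat), G 0 = z -> (forall n, G (S n) = F (G n) (F' n)) ->
  eval (cRec (cconst z) (cComp op (cPair (cComp cSnd cSnd) (cComp ca (cPair (cComp cFst cSnd) cFst)))))
       (cpair (enc l) n) (G n).
Proof. intros G G0 GS. induction n.
  - rewrite G0. constructor. apply const_ok.
  - rewrite GS. econstructor. apply IHn. econstructor. constructor. apply snd2.
    econstructor. constructor. apply fst2. constructor. apply (Ha n). apply Hop.
Qed.

Lemma cf_ok a : wff a -> forall l, eval (cf a) (enc l) (fval a l).
Proof. induction a; simpl; intros H l.
  - destruct H. econstructor. constructor; apply tc_ok; auto. apply dist_ok.
  - destruct H. econstructor. constructor; [apply IHa1|apply IHa2]; auto. apply add_ok.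
  - destruct H. econstructor. constructor; [apply IHa1|apply IHa2]; auto. apply mul_ok.
  - apply (ev_comp _ _ _ (cpair 1 (fval a l))). apply ev_pair; [apply (const_ok 1)|apply IHa]; auto. apply sub_ok.
  - destruct H. unfold cBig. econstructor. constructor. constructor. apply tc_ok; auto.
    eapply big_ok with (F := Nat.add) (F' := fun j => fval a (j :: l)). apply add_ok.
    intro j. apply IHa; auto. reflexivity. reflexivity.
  - destruct H. unfold cBig. econstructor. constructor. constructor. apply tc_ok; auto.
    eapply big_ok with (F := Nat.mul) (F' := fun j => fval a (j :: l)). apply mul_ok.
    intro j. apply IHa; auto. reflexivity. reflexivity.
Qed.

Lemma least_ex (P : nat -> Prop) (dec : forall n, P n \/ ~ P n) :
  forall n, P n -> exists m, P m /\ forall k, k < m -> ~ P k.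
Proof. intro n. induction n as [n IH] using (well_founded_induction lt_wf). intro Hn.
  assert (D : (exists k, k < n /\ P k) \/ ~ (exists k, k < n /\ P k)).
  { clear IH Hn. induction n. right; intros [k [Hk _]]; lia.
    destruct IHn as [[k [Hk Pk]]|Hno]. left; exists k; split; auto; lia.
    destruct (dec n). left; exists n; split; auto. right; intros [k [Hk Pk]].
    destruct (Nat.eq_dec k n). subst; auto. apply Hno; exists k; split; auto; lia. }
  destruct D as [[k [Hk Pk]]|Hno]. apply (IH k Hk Pk).
  exists n; split; auto. intros k Hk Pk; apply Hno; exists k; auto.
Qed.

Lemma mu_ok a l v : wff a -> (eval (cMu (cf a)) (enc l) v <->
  (holds a (v :: l) /\ forall m, m < v -> ~ holds a (m :: l))).
Proof. intro W. split.
  - intro H. inversion H; subst. split.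
    + apply fval_holds. eapply eval_det. apply (cf_ok a W (v :: l)). assumption.
    + intros m Hm Hh. match goal with H3 : forall m, m < v -> _ |- _ => destruct (H3 m Hm) as [k Hk] end.
      apply fval_holds in Hh. pose proof (eval_det _ _ _ (cf_ok a W (m :: l)) _ Hk). lia.
  - intros [Hv Hm]. constructor.
    + apply fval_holds in Hv. rewrite <- Hv. apply (cf_ok a W (v :: l)).
    + intros m Hm'. specialize (Hm m Hm'). destruct (fval a (m :: l)) eqn:E.
      * exfalso; apply Hm; apply fval_holds; auto.
      * exists n. rewrite <- E. apply (cf_ok a W (m :: l)).
Qed.

Lemma mu_halts a l : wff a -> ((exists v, eval (cMu (cf a)) (enc l) v) <-> exists n, holds a (n :: l)).
Proof. intro W. split.
  - intros [v H]. apply (mu_ok a l v W) in H. exists v; tauto.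
  - intros [n Hn]. destruct (least_ex (fun n => holds a (n :: l))) with n as [m [Hm1 Hm2]]; auto.
    intro k. rewrite <- fval_holds. destruct (fval a (k :: l)); auto.
    exists m. apply mu_ok; auto.
Qed.

Arguments pfst : simpl never.
Arguments psnd : simpl never.
Arguments dropF : simpl never.
Arguments cpair : simpl never.

Lemma succ_ok : Comp cSucc S.
Proof. intro; constructor. Qed.

Definition tF t := App1 cFst pfst t.
Definition tS t := App1 cSnd psnd t.
Definition tAdd a b := App2 cAdd Nat.add a b.
Definition tSub a b := App2 cSub Nat.sub a b.
Definition tMul a b := App2 cMul Nat.mul a b.
Definition tCp a b := App2 cCpair cpair a b.
Definition tSucc t := App1 cSucc S t.
Definition tDrop a b := App2 cDrop dropF a b.

Fixpoint up (t : tm) : tm :=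
  match t with
  | Var k => Var (S k)
  | Cst n => Cst n
  | App1 c F t => App1 c F (up t)
  | App2 c F t1 t2 => App2 c F (up t1) (up t2)
  end.

Definition Ent T j := tF (tDrop (tS T) j).
Definition eC E := tF E.
Definition eX E := tF (tS E).
Definition eY E := tF (tS (tS E)).
Definition eR E := tF (tS (tS (tS E))).
Definition eK E := tS (tS (tS (tS E))).

Definition MemF T a b d :=
  Bex (tF T) (And (Eq (eC (Ent (up T) (Var 0))) (up a))
             (And (Eq (eX (Ent (up T) (Var 0))) (up b)) (Eq (eY (Ent (up T) (Var 0))) (up d)))).

Definition LocalF T E :=
  let c := eC E in let x := eX E in let y := eY E in let r := eR E in let k := eK E in
  Or (And (Eq c (Cst 0)) (Eq y (Cst 0)))
  (Or (And (Eq c (Cst 1)) (Eq y (tSucc x)))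
  (Or (And (Eq c (Cst 2)) (Eq y (tF x)))
  (Or (And (Eq c (Cst 3)) (Eq y (tS x)))
  (Or (And (Eq c (Cst 4)) (Eq y x))
  (And (Eq c (tAdd (Cst 5) (tAdd r (tMul (Cst 4) k))))
   (Or (And (Eq r (Cst 0))
         (Bex (tF T) (And (Eq (eC (Ent (up T) (Var 0))) (tS (up k)))
                     (And (Eq (eX (Ent (up T) (Var 0))) (up x))
                          (MemF (up T) (tF (up k)) (eY (Ent (up T) (Var 0))) (up y))))))
   (Or (And (Eq r (Cst 1)) (And (MemF T (tF k) x (tF y)) (MemF T (tS k) x (tS y))))
   (Or (And (Eq r (Cst 2))
         (Or (And (Eq (tS x) (Cst 0)) (MemF T (tF k) (tF x) y))
             (And (Not (Eq (tS x) (Cst 0)))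
                  (Bex (tF T) (And (Eq (eC (Ent (up T) (Var 0))) (up c))
                   (And (Eq (eX (Ent (up T) (Var 0))) (tCp (tF (up x)) (tSub (tS (up x)) (Cst 1))))
                        (MemF (up T) (tS (up k))
                           (tCp (tF (up x)) (tCp (tSub (tS (up x)) (Cst 1)) (eY (Ent (up T) (Var 0)))))
                           (up y))))))))
       (And (Eq r (Cst 3))
         (And (MemF T k (tCp y x) (Cst 0))
              (Ball y (Bex (tF (up T))
                 (And (Eq (eC (Ent (up (up T)) (Var 0))) (up (up k)))
                 (And (Eq (eX (Ent (up (up T)) (Var 0))) (tCp (Var 1) (up (up x))))
                      (Not (Eq (eY (Ent (up (up T)) (Var 0))) (Cst 0))))))))))))))))).

Definition ValidF T := Ball (tF T) (LocalF (up T) (Ent (up T) (Var 0))).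

Definition CheckF T e x :=
  And (ValidF T) (Bex (tF T) (And (Eq (eC (Ent (up T) (Var 0))) (up e)) (Eq (eX (Ent (up T) (Var 0))) (up x)))).

Definition ec e := pfst e.
Definition ex e := pfst (psnd e).
Definition ey e := pfst (psnd (psnd e)).
Definition er e := pfst (psnd (psnd (psnd e))).
Definition ek e := psnd (psnd (psnd (psnd e))).

Definition MemP (Ex : (nat -> Prop) -> Prop) a b d :=
  Ex (fun e' => ec e' = a /\ ex e' = b /\ ey e' = d).

Definition LocalP (Ex : (nat -> Prop) -> Prop) e :=
  let c := ec e in let x := ex e in let y := ey e in let r := er e in let k := ek e in
  (c = 0 /\ y = 0) \/ (c = 1 /\ y = S x) \/ (c = 2 /\ y = pfst x) \/ (c = 3 /\ y = psnd x) \/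
  (c = 4 /\ y = x) \/
  (c = 5 + (r + 4 * k) /\
   ((r = 0 /\ Ex (fun e' => ec e' = psnd k /\ ex e' = x /\ MemP Ex (pfst k) (ey e') y)) \/
    (r = 1 /\ MemP Ex (pfst k) x (pfst y) /\ MemP Ex (psnd k) x (psnd y)) \/
    (r = 2 /\ ((psnd x = 0 /\ MemP Ex (pfst k) (pfst x) y) \/
               (~ psnd x = 0 /\ Ex (fun e' => ec e' = c /\ ex e' = cpair (pfst x) (psnd x - 1) /\
                   MemP Ex (psnd k) (cpair (pfst x) (cpair (psnd x - 1) (ey e'))) y)))) \/
    (r = 3 /\ MemP Ex k (cpair y x) 0 /\
       forall m, m < y -> Ex (fun e' => ec e' = k /\ ex e' = cpair m x /\ ~ ey e' = 0)))).

Definition EntS t j := pfst (dropF (psnd t) j).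
Definition ExT t (Q : nat -> Prop) := exists j, j < pfst t /\ Q (EntS t j).

Lemma valid_iff t : holds (ValidF (Var 0)) [t] <-> forall j, j < pfst t -> LocalP (ExT t) (EntS t j).
Proof. apply iff_refl. Qed.

Lemma ec_mk c x y r k : ec (cpair c (cpair x (cpair y (cpair r k)))) = c.
Proof. unfold ec. now rewrite pfst_cpair. Qed.
Lemma ex_mk c x y r k : ex (cpair c (cpair x (cpair y (cpair r k)))) = x.
Proof. unfold ex. now rewrite psnd_cpair, pfst_cpair. Qed.
Lemma ey_mk c x y r k : ey (cpair c (cpair x (cpair y (cpair r k)))) = y.
Proof. unfold ey. now rewrite !psnd_cpair, pfst_cpair. Qed.
Lemma er_mk c x y r k : er (cpair c (cpair x (cpair y (cpair r k)))) = r.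
Proof. unfold er. now rewrite !psnd_cpair, pfst_cpair. Qed.
Lemma ek_mk c x y r k : ek (cpair c (cpair x (cpair y (cpair r k)))) = k.
Proof. unfold ek. now rewrite !psnd_cpair. Qed.

Definition mkE c x y r k := cpair c (cpair x (cpair y (cpair r k))).



Definition ExM (M : nat -> Prop) (Q : nat -> Prop) := exists e, M e /\ Q e.

Lemma soundness (M : nat -> Prop) (Ex : (nat -> Prop) -> Prop)
  (HEx : forall Q, Ex Q -> exists e, M e /\ Q e)
  (HV : forall e, M e -> LocalP Ex e) :
  forall cc e, M e -> ec e = encode cc -> eval cc (ex e) (ey e).
Proof.
  intro cc; induction cc; intros e Me He; pose proof (HV e Me) as L; unfold LocalP in L;
  simpl in He; rewrite He in L.
  - destruct L as [[_ Hy]|L]. rewrite Hy; constructor. exfalso; lia.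
  - destruct L as [[? _]|[[_ Hy]|L]]. lia. rewrite Hy; constructor. exfalso; lia.
  - destruct L as [[? _]|[[? _]|[[_ Hy]|L]]]; try lia. rewrite Hy; apply fst_ok.
  - destruct L as [[? _]|[[? _]|[[? _]|[[_ Hy]|L]]]]; try lia. rewrite Hy; apply snd_ok.
  - destruct L as [[? _]|[[? _]|[[? _]|[[? _]|[[_ Hy]|L]]]]]; try lia. rewrite Hy; constructor.
  -
    destruct L as [[? _]|[[? _]|[[? _]|[[? _]|[[? _]|[Hc L]]]]]]; try lia.
    assert (er e = 0 /\ ek e = cpair (encode cc1) (encode cc2)) as [Hr Hk] by
      (destruct L as [[Hr _]|[[Hr _]|[[Hr _]|[Hr _]]]]; lia).
    destruct L as [[_ L]|[[? _]|[[? _]|[? _]]]]; try lia.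
    rewrite Hk, pfst_cpair, psnd_cpair in L.
    apply HEx in L as [e1 [M1 [H1c [H1x H1m]]]]. apply HEx in H1m as [e2 [M2 [H2c [H2x H2y]]]].
    econstructor. rewrite <- H1x. apply IHcc2; auto. rewrite <- H2x, <- H2y. apply IHcc1; auto.
  -
    destruct L as [[? _]|[[? _]|[[? _]|[[? _]|[[? _]|[Hc L]]]]]]; try lia.
    assert (er e = 1 /\ ek e = cpair (encode cc1) (encode cc2)) as [Hr Hk] by
      (destruct L as [[Hr _]|[[Hr _]|[[Hr _]|[Hr _]]]]; lia).
    destruct L as [[? _]|[[_ [L1 L2]]|[[? _]|[? _]]]]; try lia.
    rewrite Hk, pfst_cpair in L1. rewrite Hk, psnd_cpair in L2.
    apply HEx in L1 as [e1 [M1 [H1c [H1x H1y]]]]. apply HEx in L2 as [e2 [M2 [H2c [H2x H2y]]]].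
    rewrite <- (cpair_unpair (ey e)). constructor.
    rewrite <- H1x, <- H1y. apply IHcc1; auto. rewrite <- H2x, <- H2y. apply IHcc2; auto.
  -
    assert (forall n e, M e -> ec e = encode (cRec cc1 cc2) -> psnd (ex e) = n -> eval (cRec cc1 cc2) (ex e) (ey e)) as Gen.
    2:{ apply (Gen (psnd (ex e)) e Me); auto. }
    clear e Me He L. intro n. induction n; intros e Me He Hn; pose proof (HV e Me) as L; unfold LocalP in L;
    simpl in He; rewrite He in L.
    all: destruct L as [[? _]|[[? _]|[[? _]|[[? _]|[[? _]|[Hc L]]]]]]; try lia.
    all: assert (er e = 2 /\ ek e = cpair (encode cc1) (encode cc2)) as [Hr Hk] by
      (destruct L as [[Hr _]|[[Hr _]|[[Hr _]|[Hr _]]]]; lia).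
    all: destruct L as [[? _]|[[? _]|[[_ L]|[? _]]]]; try lia.
    + destruct L as [[_ L]|[L _]]; [|lia].
      rewrite Hk, pfst_cpair in L. apply HEx in L as [e1 [M1 [H1c [H1x H1y]]]].
      rewrite <- (cpair_unpair (ex e)), Hn. constructor. rewrite <- H1x, <- H1y. apply IHcc1; auto.
    + destruct L as [[L _]|[_ L]]; [lia|].
      apply HEx in L as [e1 [M1 [H1c [H1x H1m]]]].
      rewrite Hk, psnd_cpair in H1m. apply HEx in H1m as [e2 [M2 [H2c [H2x H2y]]]].
      rewrite Hn in H1x, H2x. simpl in H1x, H2x. rewrite Nat.sub_0_r in H1x, H2x.
      rewrite <- (cpair_unpair (ex e)), Hn. econstructor.
      * rewrite <- H1x. apply IHn; auto. rewrite H1x, psnd_cpair; auto.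
      * rewrite <- H2x, <- H2y. apply IHcc2; auto.
  -
    destruct L as [[? _]|[[? _]|[[? _]|[[? _]|[[? _]|[Hc L]]]]]]; try lia.
    assert (er e = 3 /\ ek e = encode cc) as [Hr Hk] by
      (destruct L as [[Hr _]|[[Hr _]|[[Hr _]|[Hr _]]]]; lia).
    destruct L as [[? _]|[[? _]|[[? _]|[_ [L1 L2]]]]]; try lia.
    rewrite Hk in L1, L2. apply HEx in L1 as [e1 [M1 [H1c [H1x H1y]]]].
    constructor.
    + rewrite <- H1x, <- H1y. apply IHcc; auto.
    + intros m Hm. apply L2, HEx in Hm as [e2 [M2 [H2c [H2x H2y]]]].
      destruct (ey e2) eqn:E. lia. exists n. rewrite <- H2x, <- E. apply IHcc; auto.
Qed.

Lemma local_mono (Ex1 Ex2 : (nat -> Prop) -> Prop)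
  (H12 : forall Q, Ex1 Q -> Ex2 Q)
  (Hm : forall (Q1 Q2 : nat -> Prop), (forall e, Q1 e -> Q2 e) -> Ex2 Q1 -> Ex2 Q2) e :
  LocalP Ex1 e -> LocalP Ex2 e.
Proof.
  unfold LocalP, MemP; cbv zeta. intro L.
  destruct L as [L|[L|[L|[L|[L|[Hc L]]]]]]; [left|right;left|right;right;left|do 3 right; left|do 4 right; left|do 5 right]; auto.
  split; auto.
  destruct L as [[Hr L]|[[Hr [L1 L2]]|[[Hr L]|[Hr [L1 L2]]]]].
  - left; split; auto. apply H12 in L. revert L; apply Hm. intros e' [A [B C]]; repeat split; auto.
  - right; left; repeat split; auto.
  - right; right; left; split; auto. destruct L as [[A B]|[A B]]; [left; split; auto| right; split; auto].
    apply H12 in B; revert B; apply Hm; intros e' [A1 [B1 C1]]; repeat split; auto.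
  - do 3 right; repeat split; auto.
Qed.

Definition ExL (L : list nat) (Q : nat -> Prop) := exists e, In e L /\ Q e.
Definition validL L := forall e, In e L -> LocalP (ExL L) e.

Lemma ExL_mono L (Q1 Q2 : nat -> Prop) : (forall e, Q1 e -> Q2 e) -> ExL L Q1 -> ExL L Q2.
Proof. intros H [e [H1 H2]]; exists e; auto. Qed.

Lemma ExL_sub L1 L2 Q : (forall e, In e L1 -> In e L2) -> ExL L1 Q -> ExL L2 Q.
Proof. intros H [e [H1 H2]]; exists e; auto. Qed.

Lemma local_sub L1 L2 e : (forall e, In e L1 -> In e L2) -> LocalP (ExL L1) e -> LocalP (ExL L2) e.
Proof. intro H. apply local_mono. intro; apply ExL_sub; auto. intros; eapply ExL_mono; eauto. Qed.

Lemma validL_app L1 L2 : validL L1 -> validL L2 -> validL (L1 ++ L2).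
Proof. intros V1 V2 e He. apply in_app_or in He as [He|He].
  - apply local_sub with L1; auto. intros; apply in_or_app; auto.
  - apply local_sub with L2; auto. intros; apply in_or_app; auto. Qed.

Lemma validL_cons E L : validL L -> LocalP (ExL (E :: L)) E -> validL (E :: L).
Proof. intros V HE e [He|He]. subst; auto. apply local_sub with L; auto. intros; right; auto. Qed.

Lemma MemP_app_l L1 L2 a b d : MemP (ExL L1) a b d -> MemP (ExL (L1 ++ L2)) a b d.
Proof. apply ExL_sub. intros; apply in_or_app; auto. Qed.
Lemma MemP_app_r L1 L2 a b d : MemP (ExL L2) a b d -> MemP (ExL (L1 ++ L2)) a b d.
Proof. apply ExL_sub. intros; apply in_or_app; auto. Qed.
Lemma MemP_cons E L a b d : MemP (ExL L) a b d -> MemP (ExL (E :: L)) a b d.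
Proof. apply ExL_sub. intros; right; auto. Qed.

Ltac mkrw := unfold mkE in *; rewrite ?ec_mk, ?ex_mk, ?ey_mk, ?er_mk, ?ek_mk, ?pfst_cpair, ?psnd_cpair in *.

Lemma MemP_new c x y r k L : MemP (ExL (mkE c x y r k :: L)) c x y.
Proof. exists (mkE c x y r k). split. left; auto. mkrw. auto. Qed.

Lemma completeness : forall cc x y, eval cc x y -> exists L, validL L /\ MemP (ExL L) (encode cc) x y.
Proof.
  apply eval_ind2.
  - intro x. exists [mkE 0 x 0 0 0]. split; [|apply MemP_new].
    apply validL_cons. intros e []. unfold LocalP; cbv zeta. mkrw. left; auto.
  - intro x. exists [mkE 1 x (S x) 0 0]. split; [|apply MemP_new].
    apply validL_cons. intros e []. unfold LocalP; cbv zeta. mkrw. right; left; auto.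
  - intros a b. exists [mkE 2 (cpair a b) a 0 0]. split; [|apply MemP_new].
    apply validL_cons. intros e []. unfold LocalP; cbv zeta. mkrw. do 2 right; left; auto.
  - intros a b. exists [mkE 3 (cpair a b) b 0 0]. split; [|apply MemP_new].
    apply validL_cons. intros e []. unfold LocalP; cbv zeta. mkrw. do 3 right; left; auto.
  - intro x. exists [mkE 4 x x 0 0]. split; [|apply MemP_new].
    apply validL_cons. intros e []. unfold LocalP; cbv zeta. mkrw. do 4 right; left; auto.
  - intros f g x y z _ [L1 [V1 M1]] _ [L2 [V2 M2]].
    set (E := mkE (encode (cComp f g)) x z 0 (cpair (encode f) (encode g))).
    exists (E :: L1 ++ L2). split; [|apply MemP_new].
    apply validL_cons. apply validL_app; auto.
    unfold LocalP; cbv zeta. unfold E. mkrw. do 5 right. split. simpl; lia.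
    left. split; auto. destruct M1 as [e1 [I1 [A1 [B1 C1]]]].
    exists e1. split. right; apply in_or_app; auto. repeat split; auto.
    rewrite C1. apply MemP_cons, MemP_app_r; auto.
  - intros f g x a b _ [L1 [V1 M1]] _ [L2 [V2 M2]].
    set (E := mkE (encode (cPair f g)) x (cpair a b) 1 (cpair (encode f) (encode g))).
    exists (E :: L1 ++ L2). split; [|apply MemP_new].
    apply validL_cons. apply validL_app; auto.
    unfold LocalP; cbv zeta. unfold E. mkrw. do 5 right. split. simpl; lia.
    right; left. split; auto. split. apply MemP_cons, MemP_app_l; auto. apply MemP_cons, MemP_app_r; auto.
  - intros f g x y _ [L1 [V1 M1]].
    set (E := mkE (encode (cRec f g)) (cpair x 0) y 2 (cpair (encode f) (encode g))).
    exists (E :: L1). split; [|apply MemP_new].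
    apply validL_cons; auto.
    unfold LocalP; cbv zeta. unfold E. mkrw. do 5 right. split. simpl; lia.
    do 2 right; left. split; auto. left. split; auto. apply MemP_cons; auto.
  - intros f g x n y z _ [L1 [V1 M1]] _ [L2 [V2 M2]].
    set (E := mkE (encode (cRec f g)) (cpair x (S n)) z 2 (cpair (encode f) (encode g))).
    exists (E :: L1 ++ L2). split; [|apply MemP_new].
    apply validL_cons. apply validL_app; auto.
    unfold LocalP; cbv zeta. unfold E. mkrw. do 5 right. split. simpl; lia.
    do 2 right; left. split; auto. right. split; auto.
    destruct M1 as [e1 [I1 [A1 [B1 C1]]]].
    exists e1. split. right; apply in_or_app; auto. simpl (S n - 1). rewrite Nat.sub_0_r. repeat split; auto.
    rewrite C1. apply MemP_cons, MemP_app_r; auto.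
  - intros f x n _ [L1 [V1 M1]] Hall.
    assert (forall n', n' <= n -> exists L0, validL L0 /\ forall m, m < n' ->
              ExL L0 (fun e' => ec e' = encode f /\ ex e' = cpair m x /\ ~ ey e' = 0)) as Gen.
    { intro n'; induction n'; intro Hn'.
      - exists []. split. intros e []. intros; lia.
      - destruct IHn' as [L0 [V0 H0]]. lia.
        destruct (Hall n' Hn') as [k [_ [L3 [V3 [e3 [I3 [A3 [B3 C3]]]]]]]].
        exists (L0 ++ L3). split. apply validL_app; auto.
        intros m Hm. destruct (Nat.eq_dec m n').
        + subst. exists e3. split. apply in_or_app; auto. rewrite C3. repeat split; auto.
        + destruct (H0 m) as [e0 [I0 Q0]]. lia. exists e0; split; auto. apply in_or_app; auto. }
    destruct (Gen n (le_n n)) as [L0 [V0 H0]].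
    set (E := mkE (encode (cMu f)) x n 3 (encode f)).
    exists (E :: L1 ++ L0). split; [|apply MemP_new].
    apply validL_cons. apply validL_app; auto.
    unfold LocalP; cbv zeta. unfold E. mkrw. do 5 right. split. simpl; lia.
    do 3 right. split; auto. split. apply MemP_cons, MemP_app_l; auto.
    intros m Hm. eapply ExL_sub; [|apply H0; auto]. intros; right; apply in_or_app; auto.
Qed.

Lemma dropF_enc j : forall L, dropF (enc L) j = enc (skipn j L).
Proof. induction j; intro L. reflexivity.
  unfold dropF. rewrite Nat.iter_succ_r. fold (dropF (psnd (enc L)) j).
  destruct L; simpl. rewrite <- cpair_00 at 1. rewrite psnd_cpair. change (dropF (enc []) j = enc []).
  rewrite IHj. destruct j; reflexivity.
  rewrite psnd_cpair. apply IHj. Qed.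

Lemma pfst_enc L : pfst (enc L) = nth 0 L 0.
Proof. destruct L; simpl. rewrite <- cpair_00, pfst_cpair; auto. apply pfst_cpair. Qed.

Lemma EntS_enc L j : EntS (cpair (length L) (enc L)) j = nth j L 0.
Proof. unfold EntS. rewrite psnd_cpair, dropF_enc, pfst_enc.
  revert L; induction j; intro L; destruct L; simpl; auto. Qed.

Definition UCheck e x t :=
  (forall j, j < pfst t -> LocalP (ExT t) (EntS t j)) /\ ExT t (fun e' => ec e' = e /\ ex e' = x).

Lemma encode_surj n : exists cc, encode cc = n.
Proof. induction n as [n IH] using (well_founded_induction lt_wf).
  destruct (le_lt_dec n 4) as [Hn|Hn].
  - destruct n as [|[|[|[|[|n]]]]]; try lia.
    exists cZero; auto. exists cSucc; auto. exists cFst; auto. exists cSnd; auto. exists cId; auto.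
  - set (k := (n - 5) / 4). set (r := (n - 5) mod 4).
    assert (Hd : n - 5 = 4 * k + r) by (apply Nat.div_mod; lia).
    assert (Hr : r < 4) by (apply Nat.mod_upper_bound; lia).
    assert (Hk : k < n) by lia.
    destruct (IH k Hk) as [c0 E0].
    destruct (IH (pfst k)) as [c1 E1]. pose proof (cpair_ge_a (pfst k) (psnd k)); rewrite cpair_unpair in *; lia.
    destruct (IH (psnd k)) as [c2 E2]. pose proof (cpair_ge_b (pfst k) (psnd k)); rewrite cpair_unpair in *; lia.
    destruct r as [|[|[|[|r]]]]; try lia.
    + exists (cComp c1 c2). simpl. rewrite E1, E2, cpair_unpair. lia.
    + exists (cPair c1 c2). simpl. rewrite E1, E2, cpair_unpair. lia.
    + exists (cRec c1 c2). simpl. rewrite E1, E2, cpair_unpair. lia.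
    + exists (cMu c0). simpl. rewrite E0. lia.
Qed.

Lemma ucheck_sound e x t : UCheck e x t -> exists v, psi e x v.
Proof. intros [V [j [Hj [Hc Hx]]]].
  destruct (encode_surj e) as [cc Ecc].
  exists (ey (EntS t j)). exists cc. split; auto. rewrite <- Hx.
  apply (soundness (fun e => exists j, j < pfst t /\ e = EntS t j) (ExT t)).
  - intros Q [j' [Hj' HQ]]. exists (EntS t j'). split; eauto.
  - intros e0 [j' [Hj' ->]]. apply V; auto.
  - exists j; auto.
  - congruence.
Qed.

Lemma ucheck_complete e x v : psi e x v -> exists t, UCheck e x t.
Proof. intros [cc [Ecc Hev]]. apply completeness in Hev as [L [V M]].
  exists (cpair (length L) (enc L)).
  assert (Tr : forall Q, ExL L Q -> ExT (cpair (length L) (enc L)) Q).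
  { intros Q [e0 [I0 Q0]]. apply In_nth with (d := 0) in I0 as [j [Hj Ej]].
    exists j. rewrite pfst_cpair, EntS_enc. split; auto. congruence. }
  split.
  - intros j Hj. rewrite pfst_cpair in Hj. rewrite EntS_enc.
    apply local_mono with (ExL L); auto.
    intros Q1 Q2 HQ [j' [Hj' H']]; exists j'; auto.
    apply V, nth_In; auto.
  - apply Tr. destruct M as [e0 [I0 [A0 [B0 _]]]]. exists e0; split; auto. split; congruence.
Qed.

Lemma W_ucheck e x : W e x <-> exists t, UCheck e x t.
Proof. split. intros [v H]; eapply ucheck_complete; eauto. intros [t H]; eapply ucheck_sound; eauto. Qed.

Fixpoint ecf n := match n with 0 => 0 | S n => 5 + 4 * cpair 1 (ecf n) end.
Lemma ecf_eq n : ecf n = encode (cconst n).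
Proof. induction n; simpl; auto. rewrite IHn. lia. Qed.

Definition cEc := cComp (cRec cZero (cComp cAdd (cPair (cconst 5)
   (cComp cMul (cPair (cconst 4) (cComp cCpair (cPair (cconst 1) (cComp cSnd cSnd)))))))) (cPair cZero cId).
Lemma ec_ok : Comp cEc ecf.
Proof. intro n. econstructor. constructor; constructor.
  induction n. constructor; constructor.
  econstructor. eauto. econstructor. apply ev_pair. apply (const_ok 5).
  econstructor. apply ev_pair. apply (const_ok 4). econstructor. apply ev_pair. apply (const_ok 1).
  apply snd2. apply cpair_ok. apply mul_ok. apply add_ok.
Qed.

Definition Gf j y := 5 + 4 * cpair j (6 + 4 * cpair (ecf j) (6 + 4 * cpair (ecf y) 46)).
Definition tEc t := App1 cEc ecf t.
Definition tG jt yt := tAdd (Cst 5) (tMul (Cst 4) (tCp jt (tAdd (Cst 6) (tMul (Cst 4)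
    (tCp (tEc jt) (tAdd (Cst 6) (tMul (Cst 4) (tCp (tEc yt) (Cst 46))))))))).

(* env [w; j; x; z] *)
Definition PhiF := And (CheckF (tS (Var 0)) (tF (Var 0)) (tF (Var 0)))
  (And (Eq (tSub (tSucc (Var 2)) (tF (Var 0))) (Cst 0)) (Eq (Var 3) (tG (Var 1) (tF (Var 0))))).

Lemma PhiF_iff w j x z : holds PhiF [w; j; x; z] <->
  (UCheck (pfst w) (pfst w) (psnd w) /\ (S x - pfst w = 0 /\ z = Gf j (pfst w))).
Proof. apply iff_refl. Qed.

#[local] Hint Resolve fst_ok snd_ok add_ok sub_ok mul_ok cpair_ok succ_ok drop_ok ec_ok : okdb.

Lemma PhiF_wf : wff PhiF.
Proof. cbn. repeat split; auto with okdb. Qed.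

Definition hgen c j x := cComp c (cPair (cconst j) (cPair (cconst x) (cPair cId cZero))).

Lemma hgen_enc c j x : encode (hgen c j x) = 5 + 4 * cpair (encode c) (6 + 4 * cpair (ecf j) (6 + 4 * cpair (ecf x) 46)).
Proof. unfold hgen. simpl. rewrite <- !ecf_eq. replace (cpair 4 0) with 10 by reflexivity. lia. Qed.

Lemma hgen_eval c j x z v : eval (hgen c j x) z v <-> eval c (enc [j; x; z]) v.
Proof.
  assert (P : eval (cPair (cconst j) (cPair (cconst x) (cPair cId cZero))) z (enc [j; x; z])).
  { simpl. apply ev_pair. apply const_ok. apply ev_pair. apply const_ok. apply ev_pair; constructor. }
  unfold hgen. split.
  - intro H. inversion H; subst. match goal with H1 : eval (cPair _ _) z ?m |- _ =>
      pose proof (eval_det _ _ _ P _ H1); subst end. auto.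
  - intro H. econstructor; eauto.
Qed.

Lemma Theta_ex : { t : code | t = cMu (cf PhiF) }.
Proof. exists (cMu (cf PhiF)); reflexivity. Qed.
Definition Theta := proj1_sig Theta_ex.
Definition j0 := encode Theta.
Lemma j0_eq : encode Theta = j0.
Proof. reflexivity. Qed.
Lemma Theta_eq : cMu (cf PhiF) = Theta.
Proof. unfold Theta. destruct Theta_ex as [t Ht]. simpl. auto. Qed.
Opaque j0 Theta.

Lemma hcode_enc x : encode (hgen Theta j0 x) = Gf j0 x.
Proof. rewrite hgen_enc, j0_eq. reflexivity. Qed.

Lemma W_h x z : W (Gf j0 x) z <-> exists y, W y y /\ x < y /\ z = Gf j0 y.
Proof.
  transitivity (exists v, eval (hgen Theta j0 x) z v).
  { split. intros [v [cc [E H]]]. rewrite <- hcode_enc in E. apply encode_inj in E. subst cc. exists v. exact H.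
    intros [v H]. exists v, (hgen Theta j0 x). split. apply hcode_enc. exact H. }
  transitivity (exists n, holds PhiF [n; j0; x; z]).
  { rewrite <- (mu_halts PhiF [j0; x; z] PhiF_wf). rewrite Theta_eq.
    split; intros [v H]; exists v; apply hgen_eval; exact H. }
  split.
  - intros [w Hw]. destruct (proj1 (PhiF_iff w j0 x z) Hw) as [U [Hl Hz]]. exists (pfst w). split.
    apply W_ucheck. exists (psnd w); auto. split; [lia|auto].
  - intros [y [Wy [Hl Hz]]]. apply W_ucheck in Wy as [t U]. exists (cpair y t).
    apply (proj2 (PhiF_iff (cpair y t) j0 x z)). rewrite pfst_cpair, psnd_cpair. split; [exact U| split; [lia|exact Hz]].
Qed.

Lemma cpair_mono_b a b b' : b < b' -> cpair a b < cpair a b'.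
Proof. induction 1. apply cpair_lt_b. pose proof (cpair_lt_b a m). lia. Qed.

Lemma ecf_lt n : ecf n < ecf (S n).
Proof. simpl. pose proof (cpair_ge_b 1 (ecf n)). lia. Qed.
Lemma ecf_mono n m : n < m -> ecf n < ecf m.
Proof. induction 1. apply ecf_lt. pose proof (ecf_lt m). lia. Qed.
Lemma ecf_ge n : n <= ecf n.
Proof. induction n. simpl; lia. pose proof (ecf_lt n). lia. Qed.

Lemma Gf_mono j y y' : y < y' -> Gf j y < Gf j y'.
Proof. intro H. unfold Gf. apply ecf_mono in H.
  apply (cpair_mono_a _ _ 46) in H.
  assert (6 + 4 * cpair (ecf y) 46 < 6 + 4 * cpair (ecf y') 46) as H2 by lia.
  apply (cpair_mono_b (ecf j)) in H2.
  assert (6 + 4 * cpair (ecf j) (6 + 4 * cpair (ecf y) 46) < 6 + 4 * cpair (ecf j) (6 + 4 * cpair (ecf y') 46)) as H3 by lia.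
  apply (cpair_mono_b j) in H3. lia. Qed.

Lemma Gf_ge j y : y <= Gf j y.
Proof. unfold Gf. pose proof (ecf_ge y). pose proof (cpair_ge_a (ecf y) 46).
  pose proof (cpair_ge_b (ecf j) (6 + 4 * cpair (ecf y) 46)).
  pose proof (cpair_ge_b j (6 + 4 * cpair (ecf j) (6 + 4 * cpair (ecf y) 46))). lia. Qed.

Lemma Gf_inj j y y' : Gf j y = Gf j y' -> y = y'.
Proof. intro H. destruct (Nat.lt_trichotomy y y') as [l|[l|l]]; auto;
  apply (Gf_mono j) in l; lia. Qed.

Definition A y := W y y.

Lemma A_inf N : exists y, N <= y /\ A y.
Proof. exists (ecf N). split. apply ecf_ge. exists N, (cconst N). split. symmetry; apply ecf_eq. apply const_ok. Qed.

Lemma ex_next N : exists y, (N <= y /\ A y) /\ forall y', N <= y' -> y' < y -> ~ A y'.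
Proof. destruct (A_inf N) as [y Hy].
  destruct (least_ex (fun y => N <= y /\ A y)) with y as [m [Hm1 Hm2]]; auto.
  intro n. apply classic.
  exists m. split; auto. intros y' H1 H2 H3. apply (Hm2 y'); auto. Qed.

Definition nxt N := proj1_sig (constructive_indefinite_description _ (ex_next N)).
Lemma nxt_spec N : (N <= nxt N /\ A (nxt N)) /\ forall y', N <= y' -> y' < nxt N -> ~ A y'.
Proof. unfold nxt. destruct (constructive_indefinite_description _ (ex_next N)); auto. Qed.

Fixpoint a n := match n with 0 => nxt 0 | S n => nxt (S (a n)) end.

Lemma a_A n : A (a n).
Proof. destruct n; simpl; apply nxt_spec. Qed.
Lemma a_lt n : a n < a (S n).
Proof. simpl. pose proof (nxt_spec (S (a n))). lia. Qed.
Lemma a_mono n m : n < m -> a n < a m.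
Proof. induction 1. apply a_lt. pose proof (a_lt m). lia. Qed.
Lemma a_ge n : n <= a n.
Proof. induction n. lia. pose proof (a_lt n); lia. Qed.
Lemma a_le n m : n <= m -> a n <= a m.
Proof. intro H. destruct (Nat.eq_dec n m). subst; lia. pose proof (a_mono n m); lia. Qed.

Lemma a_onto_aux n : forall y, A y -> y <= a n -> exists m, a m = y.
Proof. induction n; intros y Hy Hle.
  - exists 0. destruct (Nat.eq_dec y (a 0)); auto. exfalso.
    apply ((proj2 (nxt_spec 0)) y); auto; simpl in *; lia.
  - destruct (le_lt_dec y (a n)). apply IHn; auto.
    exists (S n). destruct (Nat.eq_dec y (a (S n))); auto. exfalso.
    apply ((proj2 (nxt_spec (S (a n)))) y); auto; simpl in *; lia.
Qed.

Lemma a_onto y : A y -> exists m, a m = y.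
Proof. intro H. apply (a_onto_aux y); auto. apply a_ge. Qed.

Definition eseq n := Gf j0 (a n).

Definition PsiF (cc : code) (f : nat -> nat) :=
  Not (Bex (tSucc (tG (Cst j0) (Var 1))) (Eq (App1 cc f (Var 0)) (tG (Cst j0) (Var 2)))).

Lemma PsiF_iff cc f n i : holds (PsiF cc f) [n; i] <-> ~ exists m, m < S (Gf j0 i) /\ f m = Gf j0 i.
Proof. apply iff_refl. Qed.

Lemma PsiF_wf cc f : Comp cc f -> wff (PsiF cc f).
Proof. intro H. cbn. repeat split; auto with okdb. Qed.

Lemma diag (Dc : code) (HK : forall x, (exists v, eval Dc x v) <-> ~ A x) : False.
Proof.
  assert (Wi : A (encode Dc) <-> exists v, eval Dc (encode Dc) v).
  { unfold A, W, psi. split.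
    - intros [v [cc [E H]]]. apply encode_inj in E. subst. exists v; exact H.
    - intros [v H]. exists v, Dc. split; [reflexivity|exact H]. }
  pose proof (HK (encode Dc)). tauto.
Qed.

Lemma not_computable : ~ computable eseq.
Proof.
  intros [c Hc]. destruct (Hc 0) as [cc0 [E0 _]].
  assert (Hcc : Comp cc0 eseq).
  { intro n. destruct (Hc n) as [cc [E H]]. rewrite <- E0 in E. apply encode_inj in E. subst; auto. }
  apply (diag (cComp (cMu (cf (PsiF cc0 eseq))) (cPair cId cZero))).
  intro i.
  transitivity (exists v, eval (cMu (cf (PsiF cc0 eseq))) (enc [i]) v).
  { assert (P : eval (cPair cId cZero) i (enc [i])) by (apply ev_pair; constructor).
    split; intros [v H]; exists v.
    - inversion H; subst. match goal with H1 : eval (cPair _ _) i ?m |- _ =>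
        pose proof (eval_det _ _ _ P _ H1); subst end. assumption.
    - econstructor. exact P. exact H. }
  rewrite (mu_halts _ _ (PsiF_wf _ _ Hcc)).
  split.
  - intros [n Hn]. apply (proj1 (PsiF_iff cc0 eseq n i)) in Hn. intro HA. apply Hn.
    destruct (a_onto i HA) as [m Hm]. exists m. split; [|unfold eseq; congruence].
    pose proof (a_ge m). pose proof (Gf_ge j0 (a m)). subst. lia.
  - intro HA. exists 0. apply (proj2 (PsiF_iff cc0 eseq 0 i)). intros [m [_ Hm]].
    apply HA. unfold eseq in Hm. apply Gf_inj in Hm. rewrite <- Hm. apply a_A.
Qed.

Theorem mainTheorem5 :
  exists e : nat -> nat,
    (forall n, e n < e (S n)) /\
    (forall n x, W (e n) x <-> exists m, n < m /\ x = e m) /\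
    ~ computable e.
Proof.
  exists eseq. split; [|split].
  - intro n. apply Gf_mono, a_lt.
  - intros n x. unfold eseq. rewrite W_h. split.
    + intros [y [Ay [Hl Hx]]]. destruct (a_onto y Ay) as [m Hm]. subst y.
      exists m. split; auto. destruct (le_lt_dec m n) as [l|l]; auto. pose proof (a_le m n l). lia.
    + intros [m [Hm Hx]]. exists (a m). split. apply a_A. split; auto. apply a_mono; auto.
  - apply not_computable.
Qed.
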